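(* Let $n\ge 3$ and let $C_n$ be the cycle graph on $n$ vertices. Then $hH_*^0(C_n)\cong H_*(\mathcal{M}(C_n))$, $hH_i^1(C_n)$ is $\mathbb{F}_2^2$ for $i=n-1$ and $0$ otherwise, and $hH_*^j(C_n)=0$ for $j\ge2$.
   Context: A finite simple graph $G$ is regarded as a simplicial complex of dimension at most $1$; its face poset $\mathcal{F}(G)$ is the directed graph with vertices the vertices and edges of $G$ and a directed edge $e\to v$ whenever $v$ is an endpoint of $e$. A matching on $\mathcal{F}(G)$ is a set $m$ of its edges, no two sharing an endpoint. Given $m$, reversing every edge of $m$ in $\mathcal{F}(G)$ gives a directed graph whose directed cycles (closed directed paths without repeated vertices) are said to be supported by $m$; $J(m)$ is their number, and $m$ is acyclic if $J(m)=0$. The matching complex $\mathrm{M}(G)$ has vertex set the edges of $\mathcal{F}(G)$ and simplices the nonempty matchings; $\mathcal{M}(G)$ is the subcomplex of nonempty acyclic matchings. Let $\widehat{C}_i^j(G)$ be the $\mathbb{F}_2$-vector space with basis the $i$-dimensional simplices (matchings with $i+1$ edges) $m$ with $J(m)=j$, and $\partial_J(m)$ the mod-2 sum of the sub-matchings $m\setminus\{e\}$ (for $e\in m$, $|m|\ge2$) with $J(m\setminus\{e\})=J(m)$. $hH_i^j(G)$ is the homology of $(\bigoplus\widehat{C}(G),\partial_J)$ in homological degree $i$ and filtration degree $j$. $H_*$ denotes simplicial homology with $\mathbb{F}_2$ coefficients. *)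

(* Defs.v *)
From mathcomp Require Import all_boot all_order all_algebra.
Set Implicit Arguments. Unset Strict Implicit. Unset Printing Implicit Defensive.
Import GRing.Theory.
Local Open Scope ring_scope.

Section FacePoset.
Variables (V : finType) (adj : rel V).

Definition gedges : {set {set V}} :=
  [set e : {set V} | [exists x, exists y, adj x y && (e == [set x; y])]].

(* Candidate arcs of the face poset F(G): a pair (e, v) stands for e -> v. *)
Definition Arc := ({set V} * V)%type.
Definition is_arc (a : Arc) : bool := (a.1 \in gedges) && (a.2 \in a.1).

Definition Node := (V + {set V})%type.

Definition is_matching (m : {set Arc}) : bool :=
  [forall a in m, is_arc a] &&
  [forall a in m, forall b in m, (a != b) ==> ((a.1 != b.1) && (a.2 != b.2))].

(* Directed graph obtained from F(G) by reversing the arcs of m. *)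
Definition dedge (m : {set Arc}) (x y : Node) : bool :=
  match x, y with
  | inr e, inl v => is_arc (e, v) && ((e, v) \notin m)
  | inl v, inr e => is_arc (e, v) && ((e, v) \in m)
  | _, _ => false
  end.

Definition arc_of_pair (x y : Node) : option Arc :=
  match x, y with
  | inr e, inl v => Some (e, v)
  | inl v, inr e => Some (e, v)
  | _, _ => None
  end.

Definition arcs_of (p : seq Node) : {set Arc} :=
  [set a : Arc | Some a \in [seq arc_of_pair xy.1 xy.2 | xy <- zip p (rot 1 p)]].

Definition is_dcycle (m : {set Arc}) (S : {set Arc}) : bool :=
  [exists k : 'I_(#|{: Node}|).+1, exists t : k.-tuple Node,
     [&& (0 < k)%N, uniq t, cycle (dedge m) t & S == arcs_of t]].

Definition J (m : {set Arc}) : nat := #|[set S : {set Arc} | is_dcycle m S]|.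

Definition acyclic (m : {set Arc}) : bool := J m == 0%N.

(* Generic F_2 chain complex whose degree-i basis is the set Bs i of
   simplices (sets of arcs with i+1 elements); the boundary of a basis
   element is the sum of its codimension-one faces lying in Bs. *)
Definition bdmx (Bs : nat -> {set {set Arc}}) (k : nat) :
    'M['F_2]_(#|Bs k.+1|, #|Bs k|) :=
  \matrix_(r < #|Bs k.+1|, c < #|Bs k|)
     ((enum_val c \subset enum_val r) : bool)%:R.

(* Dimension over F_2 of the i-th homology: dim ker d_i - dim im d_{i+1}. *)
Definition hdim (Bs : nat -> {set {set Arc}}) (i : nat) : nat :=
  (#|Bs i| - (if i is k.+1 then \rank (bdmx Bs k) else 0%N)
     - \rank (bdmx Bs i))%N.

(* Basis of \widehat C_i^j(G): matchings with i+1 arcs and J = j. *)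
Definition hatC (j : nat) (i : nat) : {set {set Arc}} :=
  [set m : {set Arc} | [&& is_matching m, #|m| == i.+1 & J m == j]].

Definition hH (i j : nat) : nat := hdim (hatC j) i.

(* i-simplices of the complex \mathcal M(G) of nonempty acyclic matchings *)
Definition acycC (i : nat) : {set {set Arc}} :=
  [set m : {set Arc} | [&& is_matching m, #|m| == i.+1 & acyclic m]].

(* dim H_i(\mathcal M(G); F_2) (unreduced simplicial homology) *)
Definition Hacyc (i : nat) : nat := hdim acycC i.

End FacePoset.

Definition cyc_adj (n : nat) : rel 'I_n :=
  fun i j => ((val j == (val i).+1 %% n) || (val i == (val j).+1 %% n))%N.
Arguments cyc_adj : clear implicits.

(* Main.v *)
Require Import Defs.
From mathcomp Require Import all_boot all_order all_algebra zify.
Set Implicit Arguments. Unset Strict Implicit. Unset Printing Implicit Defensive.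

Lemma zip_next (T : eqType) (t : seq T) x :
  x \in t -> (x, next t x) \in zip t (rot 1 t).
Proof.
case: t => [//|y p] xin.
have hi : index x (y :: p) < size (y :: p) by rewrite index_mem.
rewrite rot1_cons.
have -> : (x, next (y :: p) x) = nth (y, y) (zip (y :: p) (rcons p y)) (index x (y :: p)).
  rewrite nth_zip ?size_rcons // nth_index // nth_rcons next_nth xin.
  move: hi => /=; rewrite ltnS leq_eqVlt => /orP [/eqP ->|-> //].
  by rewrite ltnn eqxx nth_default.
by apply: mem_nth; rewrite size_zip size_rcons minnn.
Qed.

Lemma zip_next_inv (T : eqType) (t : seq T) x z :
  uniq t -> (x, z) \in zip t (rot 1 t) -> x \in t /\ z = next t x.
Proof.
case: t => [//|y p] ut; rewrite rot1_cons => /(nthP (y, y)) [i].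
rewrite size_zip size_rcons minnn => hi.
rewrite nth_zip ?size_rcons // => -[<- <-].
have xin : nth y (y :: p) i \in y :: p by exact: mem_nth.
split => //.
rewrite next_nth xin index_uniq // nth_rcons.
move: hi => /=; rewrite ltnS leq_eqVlt => /orP [/eqP ->|-> //].
by rewrite ltnn eqxx nth_default.
Qed.
Section Ord.
Variable n : nat.
Hypothesis hn : 3 <= n.

Lemma ordS_val (v : 'I_n) : val (ordS v) = if v.+1 == n then 0 else v.+1.
Proof.
rewrite /=; case: eqP => [->|h]; first by rewrite modnn.
rewrite modn_small //; have := ltn_ord v; lia.
Qed.

Lemma ordS_neq (v : 'I_n) : ordS v != v.
Proof. rewrite -val_eqE ordS_val; have := ltn_ord v; case: ifP => /eqP h /=; lia. Qed.

Lemma ordS2_neq (v : 'I_n) : ordS (ordS v) != v.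
Proof.
rewrite -val_eqE ordS_val ordS_val; have := ltn_ord v.
case: (v.+1 =P n) => h1 /=; case: ifP => /eqP h2 /=; lia.
Qed.

Lemma adjS (x y : 'I_n) : cyc_adj n x y = (y == ordS x) || (x == ordS y).
Proof. by []. Qed.

Lemma iterS_val (v0 : 'I_n) k : val (iter k (@ordS n) v0) = (v0 + k) %% n.
Proof.
elim: k => [|k IH] /=; first by rewrite addn0 modn_small.
by rewrite IH -addn1 modnDml -addnA addn1.
Qed.

Lemma reachS (v0 v : 'I_n) : exists k, iter k (@ordS n) v0 = v.
Proof.
exists (v + (n - v0)); apply: val_inj; rewrite iterS_val.
have h : v0 + (v + (n - v0)) = v + n by have := ltn_ord v0; lia.
by rewrite h modnDr modn_small.
Qed.

Lemma iter_predS k (x : 'I_n) : iter k (@ord_pred n) (iter k (@ordS n) x) = x.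
Proof. elim: k => [//|k IH]; by rewrite iterSr iterS ordSK. Qed.

Lemma reachP (v0 v : 'I_n) : exists k, iter k (@ord_pred n) v0 = v.
Proof. have [k hk] := reachS v v0; exists k; by rewrite -hk iter_predS. Qed.

Lemma pred_neq (v : 'I_n) : ord_pred v != v.
Proof. apply/eqP => h; have := ordS_neq v; by rewrite -{1}h ord_predK eqxx. Qed.

Lemma pred2_neq (v : 'I_n) : ord_pred (ord_pred v) != v.
Proof.
apply/eqP => h; have := ordS2_neq v; by rewrite -{1}h !ord_predK eqxx.
Qed.

Lemma eq_pred (x y : 'I_n) : (y == ord_pred x) = (x == ordS y).
Proof. by rewrite -(inj_eq (@ordS_inj n)) ord_predK eq_sym. Qed.

Lemma adjP (x y : 'I_n) : cyc_adj n x y = (y == ord_pred x) || (x == ord_pred y).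
Proof. by rewrite adjS orbC !eq_pred. Qed.
End Ord.

Section Gen.
Variable n : nat.
Variable sg : 'I_n -> 'I_n.
Hypothesis Hs1 : forall v, sg v != v.
Hypothesis Hs2 : forall v, sg (sg v) != v.
Hypothesis Hsi : injective sg.
Hypothesis Hadj : forall x y, cyc_adj n x y = (y == sg x) || (x == sg y).
Hypothesis Hreach : forall v0 v, exists k, iter k sg v0 = v.

Local Notation adj := (cyc_adj n).
Definition ed (v : 'I_n) : {set 'I_n} := [set v; sg v].
Definition Msg : {set Arc 'I_n} := [set (ed v, v) | v : 'I_n].

Lemma mem_ed w v : (w \in ed v) = (w == v) || (w == sg v).
Proof. by rewrite in_set2. Qed.

Lemma ed_inj : injective ed.
Proof.
move=> v w h.
have : v \in ed w by rewrite -h mem_ed eqxx.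
rewrite mem_ed => /orP [/eqP //|/eqP hv].
have : w \in ed v by rewrite h mem_ed eqxx.
rewrite mem_ed => /orP [/eqP //|/eqP hw].
by move: (Hs2 w); rewrite -hv -hw eqxx.
Qed.

Lemma ed_gedge v : ed v \in gedges adj.
Proof.
rewrite inE; apply/existsP; exists v; apply/existsP; exists (sg v).
by rewrite Hadj /ed !eqxx.
Qed.

Lemma gedgesP E : E \in gedges adj -> exists v, E = ed v.
Proof.
rewrite inE => /existsP [x /existsP [y /andP [hxy /eqP ->]]].
move: hxy; rewrite Hadj => /orP [/eqP ->|/eqP ->]; first by exists x.
by exists y; rewrite /ed setUC.
Qed.

Lemma is_arcP E w : is_arc adj (E, w) -> exists v, E = ed v /\ (w = v \/ w = sg v).
Proof.
rewrite /is_arc /= => /andP [/gedgesP [v ->]].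
rewrite mem_ed => /orP [/eqP ->|/eqP ->]; exists v; by auto.
Qed.

Lemma is_arc_ed v w : (w == v) || (w == sg v) -> is_arc adj (ed v, w).
Proof. by move=> h; rewrite /is_arc /= ed_gedge mem_ed. Qed.

Lemma match_snd m a b : is_matching adj m -> a \in m -> b \in m -> a.2 = b.2 -> a = b.
Proof.
move=> /andP [_ /forallP hm] ha hb e.
move: (hm a); rewrite ha /= => /forallP /(_ b); rewrite hb /= => /implyP h.
case: (a =P b) => // /eqP /h /andP [_]; by rewrite e eqxx.
Qed.

Lemma match_fst m a b : is_matching adj m -> a \in m -> b \in m -> a.1 = b.1 -> a = b.
Proof.
move=> /andP [_ /forallP hm] ha hb e.
move: (hm a); rewrite ha /= => /forallP /(_ b); rewrite hb /= => /implyP h.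
case: (a =P b) => // /eqP /h /andP []; by rewrite e eqxx.
Qed.

Section Cyc.
Variable m : {set Arc 'I_n}.
Hypothesis hm : is_matching adj m.
Variable t : seq (Node 'I_n).
Hypothesis ct : cycle (dedge adj m) t.

Lemma step u : inl u \in t -> (ed u, u) \in m ->
  [/\ next t (inl u) = inr (ed u), next t (inr (ed u)) = inl (sg u),
      inl (sg u) \in t & (ed (sg u), sg u) \in m].
Proof.
move=> ut um.
have h1 : next t (inl u) = inr (ed u).
  move: (next_cycle ct ut) (mem_next t (inl u)); case: (next t (inl u)) => [//|E].
  rewrite /dedge => /andP [_ hE] _.
  by have [->] := match_snd hm hE um erefl.
have et : inr (ed u) \in t by rewrite -h1 mem_next.
have h2 : next t (inr (ed u)) = inl (sg u).
  move: (next_cycle ct et); case: (next t (inr (ed u))) => [w|//].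
  rewrite /dedge => /andP [ha hn].
  have [v [ev hw]] := is_arcP ha.
  have evu := ed_inj ev; subst v.
  case: hw => hw; subst w => //; by rewrite um in hn.
have st : inl (sg u) \in t by rewrite -h2 mem_next.
split=> //.
move: (next_cycle ct st) (mem_next t (inl (sg u))); case: (next t (inl (sg u))) => [//|E].
rewrite /dedge => /andP [ha hE] _.
have [v [ev hw]] := is_arcP ha; subst E.
case: hw => hw.
  by move: hE; rewrite -hw.
have vu := Hsi hw; subst v.
have := match_fst hm hE um erefl; case=> /eqP; by rewrite (negbTE (Hs1 u)).
Qed.

Lemma propagate u0 : inl u0 \in t -> (ed u0, u0) \in m ->
  forall v, inl v \in t /\ (ed v, v) \in m.
Proof.
move=> h0 h1 v; have [k <-] := Hreach u0 v.
elim: k => [//|k [IH1 IH2]].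
by have [_ _ ? ?] := step IH1 IH2; rewrite iterS.
Qed.

Lemma M_eq : (forall v, (ed v, v) \in m) -> m = Msg.
Proof.
move=> hv; apply/eqP; rewrite eq_sym eqEcard; apply/andP; split.
  by apply/subsetP => a /imsetP [v _ ->]; exact: hv.
rewrite card_imset; last by move=> v w [].
rewrite card_ord.
have <- : #|[set a.2 | a in m]| = #|m|.
  by apply: card_in_imset => a b ha hb; exact: (match_snd hm ha hb).
by apply: leq_trans (max_card _) _; rewrite card_ord.
Qed.

Lemma arcs_eq : uniq t -> (forall v, inl v \in t /\ (ed v, v) \in m) ->
  arcs_of t = [set a | is_arc adj a].
Proof.
move=> ut hv; apply/setP => a; rewrite !inE.
apply/idP/idP.
  move=> /mapP [[x z] hxz] /=.
  have [xt ->] := zip_next_inv ut hxz.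
  move: (next_cycle ct xt); case: x {hxz} xt => [v|E] xt;
    case: (next t _) => [w|E'] //= /andP [ha _] [->] //.
case: a => E w /is_arcP [v [-> hw]].
have [vt vm] := hv v.
have [h1 h2 _ _] := step vt vm.
apply/mapP; case: hw => ->.
  by exists (inl v, next t (inl v)); [exact: zip_next | rewrite h1].
have et : inr (ed v) \in t by rewrite -h1 mem_next.
by exists (inr (ed v), next t (inr (ed v))); [exact: zip_next | rewrite h2].
Qed.
End Cyc.

Definition gmap (x : Node 'I_n) : Node 'I_n :=
  match x with
  | inl v => inr (ed v)
  | inr E => if [pick v | E == ed v] is Some v then inl (sg v) else inr E
  end.

Lemma gmap_ed v : gmap (inr (ed v)) = inl (sg v).
Proof.
rewrite /=; case: pickP => [w /eqP /ed_inj -> //|h].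
by move: (h v); rewrite eqxx.
Qed.

Lemma gmap_inj : injective gmap.
Proof.
case=> [v|E] [w|E'] /=.
- by move=> [/ed_inj ->].
- case: pickP => [//|h] [e]; by move: (h v); rewrite -e eqxx.
- case: pickP => [//|h] [e]; by move: (h w); rewrite e eqxx.
- case: pickP => [x /eqP ->|h]; case: pickP => [y /eqP ->|h'] //.
  by move=> [/Hsi ->].
Qed.

Lemma Msg_matching : is_matching adj Msg.
Proof.
apply/andP; split.
  by apply/forallP => a; apply/implyP => /imsetP [v _ ->]; apply: is_arc_ed; rewrite eqxx.
apply/forallP => a; apply/implyP => /imsetP [v _ ->].
apply/forallP => b; apply/implyP => /imsetP [w _ ->].
apply/implyP => hne /=.
have hvw : v != w by apply: contra hne => /eqP ->.
by rewrite hvw andbT (inj_eq ed_inj).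
Qed.

Lemma card_Msg : #|Msg| = n.
Proof. by rewrite card_imset ?card_ord // => v w []. Qed.

Lemma notin_Msg v : (ed v, sg v) \notin Msg.
Proof.
apply/negP => /imsetP [w _ [e1 e2]].
subst w; move: e1 => /ed_inj /eqP; by rewrite eq_sym (negbTE (Hs1 v)).
Qed.

Lemma Msg_dcycle (v0 : 'I_n) : exists S, is_dcycle adj Msg S.
Proof.
pose t := orbit gmap (inl v0).
have ut : uniq t := orbit_uniq gmap (inl v0).
have hP : forall x, x \in t -> (if x is inr E then [exists v, E == ed v] else true).
  move=> x; rewrite -fconnect_orbit => /iter_findex <-.
  elim: (findex _ _ _) => [//|k IH]; rewrite iterS.
  case: (iter k gmap (inl v0)) IH => [v _ /=|E /existsP [v /eqP ->]].
    by apply/existsP; exists v.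
  by rewrite gmap_ed.
have ct : cycle (dedge adj Msg) t.
  apply: (cycle_from_next ut) => x xt.
  have /eqP <- := next_cycle (cycle_orbit gmap_inj (inl v0)) xt.
  move: (hP x xt); case: x xt => [v|E] xt.
    move=> _; rewrite /= is_arc_ed ?eqxx //; apply/imsetP; by exists v.
  move=> /existsP [v /eqP ->]; rewrite gmap_ed /= is_arc_ed ?eqxx ?orbT //.
  exact: notin_Msg.
have hs : size t < #|{: Node 'I_n}|.+1.
  by rewrite ltnS -(card_uniqP ut) max_card.
exists (arcs_of t); apply/existsP; exists (Ordinal hs); apply/existsP; exists (in_tuple t).
rewrite /= ut ct eqxx /= andbT.
have := in_orbit gmap (inl v0); rewrite -/t; by case: (t).
Qed.

Lemma W_struct m (t : seq (Node 'I_n)) u0 : is_matching adj m -> uniq t ->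
  cycle (dedge adj m) t -> inl u0 \in t -> (ed u0, u0) \in m ->
  m = Msg /\ arcs_of t = [set a | is_arc adj a].
Proof using Hs1 Hs2 Hsi Hadj Hreach.
move=> hm ut ct h0 h1.
have hv := propagate hm ct h0 h1.
split; first by apply: M_eq => // v; case: (hv v).
exact: (arcs_eq hm ct ut hv).
Qed.

Lemma W_match : is_matching adj Msg.
Proof using Hs1 Hs2 Hsi Hadj Hreach. exact: Msg_matching. Qed.

Lemma W_dcycle (v0 : 'I_n) : exists S, is_dcycle adj Msg S.
Proof using Hs1 Hs2 Hsi Hadj Hreach. exact: Msg_dcycle. Qed.

End Gen.

Section Main.
Variable n : nat.
Hypothesis hn : 3 <= n.
Local Notation adj := (cyc_adj n).
Local Notation MS := (Msg (@ordS n)).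
Local Notation MP := (Msg (@ord_pred n)).
Local Notation A := [set a | is_arc adj a].

Let hS1 := ordS_neq hn.
Let hS2 := ordS2_neq hn.
Let hSi := @ordS_inj n.
Let hSa := @adjS n.
Let hSr := reachS hn.
Let hP1 := pred_neq hn.
Let hP2 := pred2_neq hn.
Let hPi := @ord_pred_inj n.
Let hPa := @adjP n.
Let hPr := reachP hn.

Lemma struct m S : is_matching adj m -> is_dcycle adj m S ->
  (m = MS \/ m = MP) /\ S = A.
Proof.
move=> hm /existsP [k /existsP [[t ht] /and4P [k0 /= ut ct /eqP ->]]].
rewrite /=.
have [u0 u0t] : exists u0, inl u0 \in t.
  have : t != [::] by rewrite -size_eq0 (eqP ht) -lt0n.
  case Et: t => [//|x s] _.
  case: x Et => [u|E] Et; first by exists u; rewrite mem_head.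
  have xt : inr E \in t by rewrite Et mem_head.
  move: (next_cycle ct xt) (mem_next t (inr E)); rewrite xt.
  by case: (next _ _) => [u|//] _ h; exists u; rewrite -Et.
move: (next_cycle ct u0t); case: (next _ _) => [//|E] /andP [ha hE].
have [v [ev hw]] := is_arcP hSi hSa ha; subst E.
case: hw => hw.
  subst u0; have [-> ->] := W_struct hS1 hS2 hSi hSa hSr hm ut ct u0t hE.
  by split; [left|].
have hE' : (ed (@ord_pred n) u0, u0) \in m.
  by rewrite /ed hw ordSK setUC; move: hE; rewrite hw.
have [-> ->] := W_struct hP1 hP2 hPi hPa hPr hm ut ct u0t hE'.
by split; [right|].
Qed.

Lemma J_le1 m : is_matching adj m -> J adj m <= 1.
Proof.
move=> hm; rewrite /J.
apply: leq_trans (subset_leq_card (_ : _ \subset [set A])) _; last by rewrite cards1.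
apply/subsetP => S; rewrite !inE => h.
by have [_ ->] := struct hm h.
Qed.

Lemma J_eq1 m : is_matching adj m -> J adj m = 1 -> m = MS \/ m = MP.
Proof.
move=> hm hJ.
have : [set S | is_dcycle adj m S] != set0 by rewrite -card_gt0; rewrite /J in hJ; rewrite hJ.
case/set0Pn => S; rewrite inE => /(struct hm) [] //.
Qed.

Definition v0 : 'I_n := Ordinal (leq_trans (isT : 0 < 3) hn).

Lemma J_MS : J adj MS = 1.
Proof.
apply/eqP; rewrite eqn_leq J_le1 ?(W_match hS1 hS2 hSi hSa hSr) //.
have [S hS] := W_dcycle hS1 hS2 hSi hSa hSr v0.
rewrite /J card_gt0; apply/set0Pn; exists S; by rewrite inE.
Qed.

Lemma J_MP : J adj MP = 1.
Proof.
apply/eqP; rewrite eqn_leq J_le1 ?(W_match hP1 hP2 hPi hPa hPr) //.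
have [S hS] := W_dcycle hP1 hP2 hPi hPa hPr v0.
rewrite /J card_gt0; apply/set0Pn; exists S; by rewrite inE.
Qed.

Lemma MS_MP : MS != MP.
Proof.
apply/negP => /eqP e.
have : (ed (@ordS n) v0, v0) \in MP by rewrite -e; apply/imsetP; exists v0.
case/imsetP => w _ [e1 e2]; subst w.
have : ordS v0 \in ed (@ord_pred n) v0 by rewrite -e1 /ed !inE eqxx orbT.
rewrite /ed !inE (negbTE (hS1 v0)) /= => /eqP h.
by move: (hS2 v0); rewrite {1}h ord_predK eqxx.
Qed.

Lemma hatC1 i : hatC adj 1 i = if i == n.-1 then [set MS; MP] else set0.
Proof.
apply/setP => m; rewrite !inE.
apply/idP/idP.
  case/and3P => hm /eqP hc /eqP hJ.
  have [e|e] := J_eq1 hm hJ; move: hc; rewrite e card_Msg => hc; (have -> : i == n.-1 by rewrite hc); by rewrite !inE eqxx ?orbT.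
case: ifP => /eqP hi; last by rewrite inE.
have hi' : i.+1 = n by have := hn; rewrite hi; case: (n) => [|[]].
rewrite !inE => /orP [] /eqP ->.
  by rewrite (W_match hS1 hS2 hSi hSa hSr) card_Msg hi' eqxx J_MS.
by rewrite (W_match hP1 hP2 hPi hPa hPr) card_Msg hi' eqxx J_MP.
Qed.

Lemma hatCj i j : 2 <= j -> hatC adj j i = set0.
Proof.
move=> hj; apply/setP => m; rewrite !inE.
apply/negP => /and3P [hm _ /eqP hJ].
by have := J_le1 hm; rewrite hJ; case: j hj {hJ} => [|[]].
Qed.

End Main.

Theorem mainTheorem9 (n : nat) (hn : (3 <= n)%N) :
  (forall i : nat, hH (cyc_adj n) i 0 = Hacyc (cyc_adj n) i) /\
  (forall i : nat, hH (cyc_adj n) i 1 = (if i == n.-1 then 2 else 0)%N) /\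
  (forall i j : nat, (2 <= j)%N -> hH (cyc_adj n) i j = 0%N).
Proof.
split; first by [].
have zero : forall j i, #|hatC (cyc_adj n) j i| = 0 -> hH (cyc_adj n) i j = 0.
  move=> j i /eqP h0; rewrite /hH /hdim; apply/eqP; rewrite -leqn0.
  apply: leq_trans (leq_subr _ _) _; apply: leq_trans (leq_subr _ _) _.
  by rewrite leqn0.
split; last first.
  by move=> i j hj; apply: zero; rewrite hatCj // cards0.
move=> i; case: ifP => hi; last by apply: zero; rewrite (hatC1 hn) hi cards0.
move/eqP: hi => hi.
have [k hk] : exists k, i = k.+1 by exists i.-1; rewrite hi; case: (n) hn => [|[|[]]].
rewrite {}hk in hi *.
have r1 : \rank (bdmx (hatC (cyc_adj n) 1) k) = 0.
  apply/eqP; rewrite -leqn0; apply: leq_trans (rank_leq_col _) _.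
  rewrite (hatC1 hn); case: ifP => [/eqP hk2|_]; last by rewrite cards0.
  lia.
have r2 : \rank (bdmx (hatC (cyc_adj n) 1) k.+1) = 0.
  apply/eqP; rewrite -leqn0; apply: leq_trans (rank_leq_row _) _.
  rewrite (hatC1 hn); case: ifP => [/eqP hk2|_]; last by rewrite cards0.
  lia.
rewrite /hH /hdim r1 r2 (hatC1 hn) -hi eqxx cards2 (MS_MP hn) //=.
Qed.
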